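(* Let $f:\mathbb{R}^n\to(-\infty,+\infty]$ be proper, lower semicontinuous and prox-bounded with threshold $\lambda_f>0$, let $0<\lambda<\lambda_f$ and let $x_0\in\operatorname{dom}\partial_p^\lambda f$. Define $\widehat f:\mathbb{R}^n\to(-\infty,+\infty]$ by $$\widehat f(x):=f(x_0)+\lambda^{-1}j(x_0)+\sup\Big\{\sum_{i=0}^{k-1}\langle x_i^*+\lambda^{-1}x_i,x_{i+1}-x_i\rangle+\langle x_k^*+\lambda^{-1}x_k,x-x_k\rangle\Big\}-\lambda^{-1}j(x),$$ where the supremum is over all $k\in\mathbb N$, all $x_1,\dots,x_k\in\operatorname{dom}\partial_p^\lambda f$ and all $x_i^*\in\partial_p^\lambda f(x_i)$, $i=0,\dots,k$. Then: (i) $\widehat f=h_\lambda f$ and $e_\lambda\widehat f=e_\lambda f$; (ii) if in addition $f+\lambda^{-1}j$ is convex, then $\widehat f=f$.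
   Context: $j:=\frac12\|\cdot\|^2$. $e_\lambda f(x):=\inf_y\{f(y)+\frac1{2\lambda}\|y-x\|^2\}$; prox-bounded with threshold $\lambda_f=\sup\{\lambda>0:e_\lambda f(x)>-\infty\text{ for some }x\}$. $v\in\partial_p^\lambda f(x)$ iff $x\in\operatorname{dom}f$ and $f(y)\ge f(x)+\langle v,y-x\rangle-\frac1{2\lambda}\|y-x\|^2$ for all $y$. $h_\lambda f:=-e_\lambda(-e_\lambda f)$ is the $\lambda$-proximal hull. *)

(* Defs.v *)
From HB Require Import structures.
From mathcomp Require Import all_boot all_order all_algebra.
From mathcomp Require Import all_classical all_reals ereal.
Set Implicit Arguments. Unset Strict Implicit. Unset Printing Implicit Defensive.
Import Order.TTheory GRing.Theory Num.Theory.
Local Open Scope ring_scope.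
Local Open Scope classical_set_scope.

Section Defs.
Variables (R : realType) (n : nat).
Notation V := 'rV[R]_n.

Definition dotv (u v : V) : R := \sum_(i < n) u ord0 i * v ord0 i.

Definition jfun (x : V) : R := dotv x x / 2.

Definition proper_fun (f : V -> \bar R) : Prop :=
  (forall x, f x != -oo%E) /\ (exists x, f x != +oo%E).

Definition domf (f : V -> \bar R) : set V := [set x | f x < +oo]%E.

(* lower semicontinuity w.r.t. the Euclidean topology
   (ball expressed via j(y - x) = ||y-x||^2/2 < d) *)
Definition lsc (f : V -> \bar R) : Prop :=
  forall x (a : R), (a%:E < f x)%E ->
    exists2 d : R, 0 < d & forall y, jfun (y - x) < d -> (a%:E < f y)%E.

Definition moreau (lam : R) (f : V -> \bar R) (x : V) : \bar R :=
  ereal_inf [set (f y + (jfun (y - x) / lam)%:E)%E | y in [set: V]].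

Definition prox_bounded (f : V -> \bar R) : Prop :=
  exists2 lam : R, 0 < lam & exists x, (-oo < moreau lam f x)%E.

Definition prox_threshold (f : V -> \bar R) : \bar R :=
  ereal_sup [set lam%:E | lam in [set lam : R | 0 < lam /\
                                  exists x, (-oo < moreau lam f x)%E]].

Definition prox_subdiff (lam : R) (f : V -> \bar R) (x v : V) : Prop :=
  x \in domf f /\
  forall y, (f x + (dotv v (y - x) - jfun (y - x) / lam)%:E <= f y)%E.

Definition dom_prox_subdiff (lam : R) (f : V -> \bar R) : set V :=
  [set x | exists v, prox_subdiff lam f x v].

Definition prox_hull (lam : R) (f : V -> \bar R) (x : V) : \bar R :=
  (- moreau lam (fun y => - moreau lam f y) x)%E.

Definition chain_sums (lam : R) (f : V -> \bar R) (x0 x : V) : set (\bar R) :=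
  [set s | exists (k : nat) (xs vs : nat -> V),
     [/\ xs 0%N = x0,
         (forall i, (i <= k)%N -> prox_subdiff lam f (xs i) (vs i)) &
         s = ((\sum_(i < k) dotv (vs i + lam^-1 *: xs i) (xs i.+1 - xs i))
              + dotv (vs k + lam^-1 *: xs k) (x - xs k))%:E]].

Definition fhat (lam : R) (f : V -> \bar R) (x0 x : V) : \bar R :=
  (f x0 + (jfun x0 / lam)%:E + ereal_sup (chain_sums lam f x0 x)
   - (jfun x / lam)%:E)%E.

Definition convex_fun (g : V -> \bar R) : Prop :=
  forall (x y : V) (t : R), 0 < t < 1 ->
    (g (((1 - t) *: x + t *: y)%R) <= (1 - t)%:E * g x + t%:E * g y)%E.

End Defs.

(* Main.v *)
Set Warnings "-notation-overridden,-ambiguous-paths,-notation-incompatible-prefix".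
Require Import Defs.
From HB Require Import structures.
From mathcomp Require Import all_boot all_order all_algebra.
From mathcomp Require Import all_classical all_reals ereal.
From mathcomp Require Import topology normedtype matrix_normedtype sequences.
From mathcomp Require Import ring lra.
Import Order.TTheory GRing.Theory Num.Theory numFieldTopology.Exports numFieldNormedType.Exports.
Local Open Scope ring_scope.
Local Open Scope classical_set_scope.
Set Implicit Arguments. Unset Strict Implicit. Unset Printing Implicit Defensive.

Lemma archi_inv (R : realType) (eps : R) : 0 < eps -> exists N : nat, (N.+1%:R)^-1 < eps.
Proof.
move=> e0; exists (Num.truncn (eps^-1)).
have h0 : 0 <= eps^-1 by rewrite invr_ge0 ltW.
have h : eps^-1 < (Num.truncn (eps^-1)).+1%:R by rewrite -truncn_lt_nat.
by rewrite -[X in _ < X](invrK eps) ltf_pV2 ?posrE ?invr_gt0 ?ltr0n.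
Qed.

Lemma small_lin (R : realType) (a b : R) : 0 <= b ->
  (forall s, 0 < s < 1 -> a <= s * b) -> a <= 0.
Proof.
move=> b0 H; rewrite leNgt; apply/negP => a0.
set s := a / (a + 2 * b + 2).
have d0 : 0 < a + 2 * b + 2 by lra.
have s0 : 0 < s by rewrite /s divr_gt0.
have s1 : s < 1 by rewrite /s ltr_pdivrMr // mul1r; lra.
have := H s; rewrite s0 s1 => /(_ isT).
have -> : s * b = a * (b / (a + 2 * b + 2)) by rewrite /s mulrAC -mulrA.
have : b / (a + 2 * b + 2) < 1 by rewrite ltr_pdivrMr // mul1r; lra.
move=> hb hh; have : a * (b / (a + 2 * b + 2)) < a * 1 by rewrite ltr_pM2l.
lra.
Qed.

Lemma ereal_mid (R : realType) (x : R) (y : \bar R) : (x%:E < y)%E ->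
  exists2 a, x < a & (a%:E < y)%E.
Proof.
case: y => [t||] h.
- exists ((x + t) / 2); move: h; rewrite !lte_fin => h; lra.
- by exists (x + 1); [lra | rewrite ltry].
- by move: h; rewrite ltNge leNye.
Qed.

Lemma abs_le_sq (R : realType) (a : R) : `|a| <= 1 + a * a.
Proof. by rewrite ler_norml; apply/andP; split; nra. Qed.

Lemma le_approx (R : realType) (F y : \bar R) :
  (forall a : R, (a%:E < y)%E -> (a%:E <= F)%E) -> (y <= F)%E.
Proof.
case: F => [r| |] H.
- rewrite leNgt; apply/negP => hr; have [a ha1 ha2] := ereal_mid hr.
  by have := H a ha2; rewrite lee_fin; lra.
- by rewrite leey.
- case: y H => [t| |] H //.
  + by have := H (t - 1); rewrite lte_fin ltrBlDr ltrDl ltr01 => /(_ isT).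
  + by have := H 0; rewrite ltry => /(_ isT).
Qed.
Section Dot.
Variables (R : realType) (n : nat).
Notation V := 'rV[R]_n.
Implicit Types (u v w : V).

Lemma dotvC u v : dotv u v = dotv v u.
Proof. by rewrite /dotv; apply: eq_bigr => i _; rewrite mulrC. Qed.

Lemma dotvDl u v w : dotv (u + v) w = dotv u w + dotv v w.
Proof. by rewrite /dotv -big_split; apply: eq_bigr => i _; rewrite !mxE mulrDl. Qed.

Lemma dotvDr u v w : dotv w (u + v) = dotv w u + dotv w v.
Proof. by rewrite dotvC dotvDl !(dotvC w). Qed.

Lemma dotvZl (a : R) u v : dotv (a *: u) v = a * dotv u v.
Proof. by rewrite /dotv mulr_sumr; apply: eq_bigr => i _; rewrite !mxE mulrA. Qed.

Lemma dotvZr (a : R) u v : dotv v (a *: u) = a * dotv v u.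
Proof. by rewrite dotvC dotvZl dotvC. Qed.

Lemma dotvNl u v : dotv (- u) v = - dotv u v.
Proof. by rewrite -scaleN1r dotvZl mulN1r. Qed.

Lemma dotvNr u v : dotv v (- u) = - dotv v u.
Proof. by rewrite dotvC dotvNl dotvC. Qed.

Lemma dotvBl u v w : dotv (u - v) w = dotv u w - dotv v w.
Proof. by rewrite dotvDl dotvNl. Qed.

Lemma dotvBr u v w : dotv w (u - v) = dotv w u - dotv w v.
Proof. by rewrite dotvDr dotvNr. Qed.

Lemma dotv0l v : dotv 0 v = 0.
Proof. by rewrite /dotv big1 // => i _; rewrite mxE mul0r. Qed.

Lemma dotv0r v : dotv v 0 = 0.
Proof. by rewrite dotvC dotv0l. Qed.

Lemma dotvv_ge0 u : 0 <= dotv u u.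
Proof. by rewrite /dotv; apply: sumr_ge0 => i _; rewrite -expr2 sqr_ge0. Qed.

Lemma jfun_ge0 u : 0 <= jfun u.
Proof. by rewrite /jfun divr_ge0 // dotvv_ge0. Qed.

Definition dotE := (dotvDl, dotvDr, dotvBl, dotvBr, dotvZl, dotvZr, dotvNl, dotvNr, dotv0l, dotv0r).

Lemma jfunD u v : jfun (u + v) = jfun u + dotv u v + jfun v.
Proof. rewrite /jfun !dotE (dotvC v u); by field. Qed.

Lemma jfunB u v : jfun (u - v) = jfun u - dotv u v + jfun v.
Proof. rewrite /jfun !dotE (dotvC v u); by field. Qed.

Lemma jfunN u : jfun (- u) = jfun u.
Proof. by rewrite /jfun !dotE opprK. Qed.

Lemma jfunZ (a : R) u : jfun (a *: u) = a ^+ 2 * jfun u.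
Proof. rewrite /jfun !dotE; by field. Qed.

Lemma jfun_sym u v : jfun (u - v) = jfun (v - u).
Proof. by rewrite -jfunN opprB. Qed.

Lemma dot_le (s : R) u v : 0 < s -> dotv u v <= s * jfun u + jfun v / s.
Proof.
move=> s0; have := jfun_ge0 (s *: u - v); rewrite jfunB jfunZ dotvZl => h.
have h2 : 0 <= (s ^+ 2 * jfun u - s * dotv u v + jfun v) / s by rewrite divr_ge0 // ltW.
have -> : s * jfun u + jfun v / s = (s ^+ 2 * jfun u + jfun v) / s by field; rewrite gt_eqF.
rewrite ler_pdivlMr //; nra.
Qed.

Lemma dot_ge (s : R) u v : 0 < s -> - (s * jfun u + jfun v / s) <= dotv u v.
Proof. by move=> s0; rewrite lerNl -dotvNr; have := dot_le u (- v) s0; rewrite jfunN. Qed.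

Lemma jfun_le (s : R) u v : 0 < s ->
  jfun (u + v) <= (1 + s) * jfun u + (1 + s^-1) * jfun v.
Proof. move=> s0; rewrite jfunD; have h := dot_le u v s0; rewrite mulrDl mulrDl !mul1r; lra. Qed.

End Dot.

Section Topo.
Variables (R : realType) (n : nat).
Notation V := 'rV[R]_n.

Lemma j_lower (p z : V) (eta : R) : 0 < eta ->
  exists2 d, 0 < d & forall y : V, jfun (y - p) < d -> jfun (p - z) - eta <= jfun (y - z).
Proof.
move=> e0; set J := jfun (p - z).
have J0 : 0 <= J by exact: jfun_ge0.
set s := eta / (2 * (J + 1)).
have s0 : 0 < s by rewrite /s divr_gt0 // mulr_gt0 //; lra.
exists (s * eta / 2); first by rewrite divr_gt0 // mulr_gt0.
move=> y hy.
have -> : y - z = (p - z) + (y - p) by rewrite [RHS]addrC addrA subrK.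
rewrite jfunD.
have hd := dot_ge (p - z) (y - p) s0.
have h1 : s * J <= eta / 2.
  have -> : eta / 2 = s * (J + 1).
    by rewrite /s; field; rewrite gt_eqF //; lra.
  by rewrite ler_pM2l //; lra.
have h2 : jfun (y - p) / s <= eta / 2.
  rewrite ler_pdivrMr //.
  have -> : eta / 2 * s = s * eta / 2 by rewrite mulrC mulrA.
  exact: ltW.
have := jfun_ge0 (y - p); rewrite -/J in hd *; lra.
Qed.

Lemma nbhs_j (p : V) (d : R) : 0 < d -> nbhs p [set y : V | jfun (y - p) < d].
Proof.
move=> d0; apply/nbhs_ballP.
set e := Num.min 1 (d / (n%:R + 1)).
have n1 : 0 < n%:R + 1 :> R by rewrite ltr_wpDl.
have e0 : 0 < e by rewrite lt_min ltr01 divr_gt0.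
have e1 : e <= 1 by rewrite ge_min lexx.
have e2 : e <= d / (n%:R + 1) by rewrite ge_min lexx orbT.
exists e => // y [_ hy] /=.
have hsum : \sum_(i < n) (y - p) ord0 i * (y - p) ord0 i <= \sum_(i < n) e * e.
  apply: ler_sum => i _; rewrite !mxE.
  have hi : `|y ord0 i - p ord0 i| < e.
    by have := hy ord0 i; rewrite /ball /= distrC.
  apply: le_trans (ler_norm _) _; rewrite normrM.
  by apply: ler_pM => //; apply: ltW.
move: hsum; rewrite sumr_const card_ord -mulr_natl => hsum.
rewrite /jfun /dotv.
have ee : e * e <= e by rewrite ger_pMr.
have : e * (n%:R + 1) <= d by rewrite -ler_pdivlMr.
have nn : 0 <= n%:R :> R by [].
have : n%:R * (e * e) <= n%:R * e by rewrite ler_wpM2l.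
set S := \sum_(i < n) _ in hsum *.
have S0 : 0 <= S by apply: sumr_ge0 => i _; rewrite -expr2 sqr_ge0.
move=> h3 h4; rewrite ltr_pdivrMr //; nra.
Qed.

End Topo.

Section Topo2.
Variables (R : realType) (n : nat).
Notation V := 'rV[R]_n.
Lemma coord_bound (v : V) i : `|v ord0 i| <= 1 + 2 * jfun v.
Proof.
apply: le_trans (abs_le_sq _) _; rewrite lerD2l.
have -> : 2 * jfun v = dotv v v by rewrite /jfun; field.
rewrite /dotv (bigD1 i) //= lerDl; apply: sumr_ge0 => j _.
by rewrite -expr2 sqr_ge0.
Qed.
End Topo2.

Section Ids.
Variables (R : realType) (n : nat).
Notation V := 'rV[R]_n.
Lemma id_step (a b w d : V) (N lam fa fb : R) : N != 0 -> lam != 0 ->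
  (fa + jfun a / lam - (fb + jfun b / lam) - lam^-1 * dotv w (a - b))
      - (dotv d a / (N * lam) - dotv d b / (N * lam))
    = (fa + jfun (a - (w + N^-1 *: d)) / lam) - (fb + jfun (b - (w + N^-1 *: d)) / lam).
Proof.
move=> N0 l0.
rewrite /jfun !dotE ?(dotvC a w) ?(dotvC b w) ?(dotvC a d) ?(dotvC b d) ?(dotvC d w).
by field; rewrite N0 l0.
Qed.
Lemma id_fin (p z x : V) (lam fp : R) : lam != 0 ->
  fp + jfun (p - z) / lam - jfun (z - x) / lam
  = (fp + jfun p / lam) + lam^-1 * dotv z (x - p) - jfun x / lam.
Proof.
move=> l0; rewrite /jfun !dotE ?(dotvC p z) ?(dotvC x z).
by field; rewrite l0.
Qed.
Lemma id_min (v x : V) (lam t : R) : 0 < lam -> 0 < t ->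
  jfun (v - (lam / (lam + t)) *: x) / (lam * t / (lam + t))
  = jfun v / lam + jfun (v - x) / t
    + (jfun ((lam / (lam + t)) *: x) / (lam * t / (lam + t)) - jfun x / t).
Proof.
move=> l0 t0; rewrite /jfun !dotE ?(dotvC v x).
by field; rewrite !gt_eqF // ?addr_gt0.
Qed.

Lemma id_cvx (p y x : V) (s : R) :
  jfun ((1 - s) *: p + s *: y - x)
  = jfun (p - x) + s * dotv (p - x) (y - p) + s ^+ 2 * jfun (y - p).
Proof.
have -> : (1 - s) *: p + s *: y - x = (p - x) + s *: (y - p).
  by apply/rowP => i; rewrite !mxE; ring.
by rewrite jfunD jfunZ dotvZr.
Qed.
End Ids.

Section Main.
Variables (R : realType) (n : nat) (f : 'rV[R]_n -> \bar R) (lam : R).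
Notation V := 'rV[R]_n.
Hypothesis fprop : proper_fun f.
Hypothesis lam0 : 0 < lam.

Lemma lamN0 : lam != 0. Proof. by rewrite gt_eqF. Qed.

Lemma fNy x : f x != -oo%E. Proof. by case: fprop. Qed.

Lemma fin_dom {x} : x \in domf f -> f x \is a fin_num.
Proof. by move=> /set_mem /= h; rewrite fin_numE fNy /= -ltey. Qed.

Lemma le_fE (a b : R) y : (forall r, f y = r%:E -> a <= r + b) ->
  (a%:E <= f y + b%:E)%E.
Proof.
case E: (f y) => [r| |] h; first by rewrite -EFinD lee_fin h.
  by rewrite addye ?leey.
by have := fNy y; rewrite E.
Qed.

Definition gr (x : V) := fine (f x) + jfun x / lam.

Lemma step_e {x v} : prox_subdiff lam f x v -> forall y,
  ((gr x + dotv (v + lam^-1 *: x) (y - x))%:E <= f y + (jfun y / lam)%:E)%E.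
Proof.
move=> [xd h] y; have fx := fin_dom xd; have := h y.
rewrite -(fineK fx) -EFinD => hy; apply: le_fE => r E.
move: hy; rewrite E lee_fin => hy.
have Eqn : jfun x / lam + dotv (lam^-1 *: x) (y - x) = jfun y / lam - jfun (y - x) / lam.
  by rewrite /jfun !dotE (dotvC y x); field; rewrite lamN0.
rewrite /gr dotvDl; lra.
Qed.

Lemma step_r {x v} y : prox_subdiff lam f x v -> f y \is a fin_num ->
  gr x + dotv (v + lam^-1 *: x) (y - x) <= gr y.
Proof. by move=> h fy; have := step_e h y; rewrite -(fineK fy) -EFinD lee_fin. Qed.

Lemma chain_bound (x0 : V) k (xs vs : nat -> V) : xs 0%N = x0 ->
  (forall i, (i <= k)%N -> prox_subdiff lam f (xs i) (vs i)) ->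
  gr x0 + \sum_(i < k) dotv (vs i + lam^-1 *: xs i) (xs i.+1 - xs i) <= gr (xs k).
Proof.
move=> x00; elim: k => [|k IH] H; first by rewrite big_ord0 addr0 x00.
have IH' := IH (fun i hi => H i (leqW hi)).
rewrite big_ord_recr /=.
have h1 : f (xs k.+1) \is a fin_num by case: (H k.+1 (leqnn _)) => /fin_dom.
have := step_r (H k (leqW (leqnn _))) h1; lra.
Qed.

Lemma chain_aff (x0 : V) k (xs vs : nat -> V) : xs 0%N = x0 ->
  (forall i, (i <= k)%N -> prox_subdiff lam f (xs i) (vs i)) ->
  forall y, ((gr x0 + \sum_(i < k) dotv (vs i + lam^-1 *: xs i) (xs i.+1 - xs i)
     + dotv (vs k + lam^-1 *: xs k) (y - xs k))%:E <= f y + (jfun y / lam)%:E)%E.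
Proof.
move=> x00 H y; apply: le_trans (step_e (H k (leqnn _)) y).
by rewrite lee_fin lerD2r chain_bound.
Qed.

Lemma aff_moreau (A : R) (u q : V) :
  (forall y, ((A + dotv u (y - q))%:E <= f y + (jfun y / lam)%:E)%E) ->
  forall x, ((A + dotv u (x - q) - jfun x / lam)%:E <=
     moreau lam f (lam *: u) - (jfun (lam *: u - x) / lam)%:E)%E.
Proof.
move=> H x; rewrite leeBrDr // -EFinD.
apply: le_ereal_inf_tmp => _ [y _ <-]; apply: le_fE => r E.
have := H y; rewrite E -EFinD lee_fin => hy.
have Eqn : A + dotv u (x - q) - jfun x / lam + jfun (lam *: u - x) / lam
   = A + dotv u (y - q) - jfun y / lam + jfun (y - lam *: u) / lam.
  rewrite /jfun !dotE ?(dotvC x u) ?(dotvC y u); field; exact: lamN0.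
rewrite Eqn lerD2r lerBlDr. exact hy.
Qed.

Lemma ph_ge x z : (moreau lam f z - (jfun (z - x) / lam)%:E <= prox_hull lam f x)%E.
Proof.
rewrite /prox_hull leeNr.
apply: le_trans (ereal_inf_lbound _) _; first by exists z.
by rewrite oppeB // fin_num_adde_defl.
Qed.

Lemma ph_le x M : (forall z, moreau lam f z - (jfun (z - x) / lam)%:E <= M)%E ->
  (prox_hull lam f x <= M)%E.
Proof.
move=> H; rewrite /prox_hull leeNl.
apply: le_ereal_inf_tmp => _ [z _ <-].
by rewrite -oppeB ?fin_num_adde_defl // leeNr oppeK H.
Qed.

Hypothesis flsc : lsc f.
Hypothesis lamth : (lam%:E < prox_threshold f)%E.

Lemma coer : exists mu, lam < mu /\ exists (w : V) (c : R),
  forall y : V, (c%:E <= f y + (jfun (y - w) / mu)%:E)%E.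
Proof.
have [_ [mu [mu0 [w hw]] <-] lt] := ereal_sup_gt lamth.
exists mu; split; first by rewrite -lte_fin.
exists w.
have [c hc] : exists c : R, (c%:E <= moreau mu f w)%E.
  case E: (moreau mu f w) => [c| |]; first by exists c.
    by exists 0; rewrite leey.
  by rewrite E in hw.
exists c => y; apply: le_trans hc _; apply: ereal_inf_lbound; by exists y.
Qed.

Lemma prox_ex (l : R) (z : V) : 0 < l -> l <= lam -> exists p : V,
  f p \is a fin_num /\ forall y : V,
  (f p + (jfun (p - z) / l)%:E <= f y + (jfun (y - z) / l)%:E)%E.
Proof.
move=> l0 llam.
have [mu [lammu [w [c hc]]]] := coer.
have lmu : l < mu by apply: le_lt_trans lammu.
have mu0 : 0 < mu by apply: lt_trans lmu.
set s := (mu - l) / (2 * l).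
have s0 : 0 < s by rewrite /s divr_gt0 ?mulr_gt0 // subr_gt0.
set beta := (l^-1 - mu^-1) / 2.
have beta0 : 0 < beta.
  by rewrite /beta divr_gt0 // subr_gt0 ltf_pV2 ?posrE.
set C0 := c - (1 + s^-1) * jfun (z - w) / mu.
have lowb : forall y : V,
    ((C0 + beta * jfun (y - z))%:E <= f y + (jfun (y - z) / l)%:E)%E.
  move=> y; apply: le_fE => r E.
  have := hc y; rewrite E -EFinD lee_fin => hr.
  have hj := jfun_le (y - z) (z - w) s0.
  rewrite (_ : y - z + (z - w) = y - w) in hj; last by rewrite addrA subrK.
  have mi : 0 <= mu^-1 by rewrite invr_ge0 ltW.
  have := ler_wpM2r mi hj.
  have -> : ((1 + s) * jfun (y - z) + (1 + s^-1) * jfun (z - w)) * mu^-1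
     = (l^-1 - beta) * jfun (y - z) + (1 + s^-1) * jfun (z - w) / mu.
    rewrite /s /beta; field.
    by rewrite !gt_eqF //= ?subr_gt0 // mulr_gt0.
  rewrite /C0; move: hr; set J := jfun (y - z); set K := jfun (y - w).
  set K2 := (1 + s^-1) * jfun (z - w) / mu.
  rewrite -/(K / mu) => hr h.
  have -> : J / l = l^-1 * J by rewrite mulrC.
  lra.
have [y0 fy0] : exists y0 : V, f y0 != +oo%E by case: fprop => _ [y0 h]; exists y0.
set h := fun y : V => (f y + (jfun (y - z) / l)%:E)%E.
have mlt : (moreau l f z < +oo)%E.
  apply: le_lt_trans (ereal_inf_lbound _) _; first by exists y0.
  by rewrite ltey; case E: (f y0) fy0.
have mge : (C0%:E <= moreau l f z)%E.
  apply: le_ereal_inf_tmp => _ [y _ <-]; apply: le_trans (lowb y).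
  by rewrite lee_fin lerDl mulr_ge0 // ?jfun_ge0 // ltW.
have [M EM] : exists M, moreau l f z = M%:E.
  move: mlt mge; case: (moreau l f z) => [M||] //; first by exists M.
have H : forall k : nat, exists y : V, (h y < (M + (k.+1%:R)^-1)%:E)%E.
  move=> k; have : (moreau l f z < (M + (k.+1%:R)^-1)%:E)%E.
    by rewrite EM lte_fin ltrDl invr_gt0 ltr0n.
  by move=> /ereal_inf_lt [_ [y _ <-] hy]; exists y.
have [ys hys] := choice H.
set B := (M + 1 - C0) / beta.
have jb : forall k, jfun (ys k - z) <= B.
  move=> k; rewrite /B ler_pdivlMr //.
  have := le_lt_trans (lowb (ys k)) (hys k); rewrite lte_fin => h1.
  have : (k.+1%:R)^-1 <= 1 :> R by rewrite invf_le1 ?ler1n // ltr0n.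
  rewrite mulrC; move: h1; set t := beta * _; set q := (k.+1%:R)^-1; move=> h1 h2; lra.
pose A := fun i : 'I_n => `[z ord0 i - (1 + 2 * B), z ord0 i + (1 + 2 * B)]%classic.
have cK : compact [set v : V | forall i, A i (v ord0 i)].
  by apply: rV_compact => i; apply: segment_compact.
have FK : \forall k \near \oo, [set v : V | forall i, A i (v ord0 i)] (ys k).
  apply: filterE => k i; rewrite /A /= in_itv /= -ler_distlC.
  apply: (@le_trans _ _ (1 + 2 * jfun (ys k - z))).
    by rewrite distrC (_ : ys k ord0 i - z ord0 i = (ys k - z) ord0 i) ?coord_bound // !mxE.
  by rewrite lerD2l ler_pM2l.
have [p [Kp clp]] := cK (ys @ \oo) _ FK.
have hpM : (h p <= M%:E)%E.
  rewrite leNgt; apply/negP => hlt.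
  set jp := jfun (p - z) / l.
  have fp1 : ((M - jp)%:E < f p)%E by rewrite EFinB lteBlDr.
  have [a1 ha1 ha1'] := ereal_mid fp1.
  set eps := (a1 - (M - jp)) / 2.
  have eps0 : 0 < eps by rewrite /eps divr_gt0 // subr_gt0.
  have [d1 d10 hd1] := flsc ha1'.
  have [d2 d20 hd2] := j_lower p z (mulr_gt0 l0 eps0).
  have [N hN] := archi_inv eps0.
  have dm0 : 0 < Num.min d1 d2 by rewrite lt_min d10 d20.
  have FA : (ys @ \oo) (ys @` [set k | (N <= k)%N]).
    by apply: filterS (nbhs_infty_ge N) => k hk; exists k.
  have [_ [[k hk <-] hjk]] := clp _ _ FA (nbhs_j p dm0).
  move: hjk; rewrite /= lt_min => /andP[hk1 hk2].
  have f1 := hd1 _ hk1.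
  have j2 := hd2 _ hk2.
  have := hys k; rewrite /h.
  case E: (f (ys k)) f1 => [r||] f1'; last 2 first.
  - by rewrite addye.
  - by move: f1'; rewrite ltNge leNye.
  rewrite -EFinD lte_fin; move: f1'; rewrite lte_fin => f1'.
  have j3 : jp - eps <= jfun (ys k - z) / l.
    have li : 0 <= l^-1 by rewrite invr_ge0 ltW.
    have := ler_wpM2r li j2.
    have -> : (jfun (p - z) - l * eps) * l^-1 = jp - eps.
      by rewrite /jp; field; rewrite gt_eqF.
    by [].
  have kN : (k.+1%:R)^-1 <= (N.+1%:R)^-1 :> R.
    by rewrite lef_pV2 ?posrE ?ltr0n // ler_nat ltnS.
  move: j3 kN hN; rewrite /eps; set q1 := (k.+1%:R)^-1; set q2 := (N.+1%:R)^-1.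
  move=> *; lra.
exists p.
have fpfin : f p \is a fin_num.
  rewrite fin_numE fNy /=; move: hpM; rewrite /h.
  by case: (f p) => // _; rewrite addye.
split => // y; apply: le_trans hpM _; rewrite -EM.
by apply: ereal_inf_lbound; exists y.
Qed.

Lemma prox_sub (p z : V) : f p \is a fin_num ->
  (forall y : V, (f p + (jfun (p - z) / lam)%:E <= f y + (jfun (y - z) / lam)%:E)%E) ->
  prox_subdiff lam f p (lam^-1 *: (z - p)).
Proof.
move=> fp H; split.
  by rewrite inE /domf /= ltey; move: fp; rewrite fin_numE => /andP[].
move=> y; rewrite -(fineK fp) -EFinD -[f y]adde0; apply: le_fE => r E.
have := H y; rewrite E -(fineK fp) -!EFinD lee_fin.
have Eqn : jfun (p - z) / lam - jfun (y - z) / lam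
   = dotv (lam^-1 *: (z - p)) (y - p) - jfun (y - p) / lam.
  by rewrite /jfun !dotE ?(dotvC p z) ?(dotvC y z) ?(dotvC y p); field; rewrite lamN0.
move: Eqn; set a := jfun (p - z) / lam; set b := jfun (y - z) / lam.
set c := dotv _ _; set e := jfun (y - p) / lam; move=> Eqn hh.
rewrite addr0; lra.
Qed.

Section MainIneq.
Variables (x0 v0 : V).
Hypothesis hx0 : prox_subdiff lam f x0 v0.

Lemma fx0 : f x0 \is a fin_num.
Proof. by case: hx0 => /fin_dom. Qed.

Lemma fhatE x : fhat lam f x0 x =
  (ereal_sup (chain_sums lam f x0 x) + (gr x0 - jfun x / lam)%:E)%E.
Proof.
rewrite /fhat /gr -(fineK fx0).
case: (ereal_sup _) => [s||] //=.
by rewrite -!EFinD; congr (_%:E); ring.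
Qed.

Lemma main_ineq x z :
  (moreau lam f z - (jfun (z - x) / lam)%:E <= fhat lam f x0 x)%E.
Proof.
have [P hP] := choice (fun z => prox_ex z lam0 (lexx lam)).
have [fp hp] := hP z; set p := P z in fp hp.
have mz : (moreau lam f z <= f p + (jfun (p - z) / lam)%:E)%E.
  by apply: ereal_inf_lbound; exists p.
rewrite fhatE; apply/lee_subgt0Pr => eps eps0.
apply: le_trans (_ : (fine (f p) + jfun (p - z) / lam - jfun (z - x) / lam - eps)%:E <= _)%E.
  rewrite -(fineK fp) -EFinD in mz.
  by rewrite !EFinB; apply: leeB (lexx _); apply: leeB mz (lexx _).
set z0 := x0 + lam *: v0.
set d := z - z0.
set K := `|dotv d (p - x0)| / lam.
have K0 : 0 <= K by rewrite divr_ge0 // ltW.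
have [N hN] := archi_inv (divr_gt0 eps0 (ltr_wpDl K0 ltr01)).
set Nn := N.+1.
have Nn0 : (Nn%:R : R) != 0 by rewrite pnatr_eq0.
pose zz := fun i : nat => z0 + (i%:R / Nn%:R) *: d.
pose xs := fun i : nat => if i == 0%N then x0 else P (zz i).
pose vs := fun i : nat => lam^-1 *: (zz i - xs i).
have zz0 : zz 0%N = z0 by rewrite /zz mul0r scale0r addr0.
have zzN : zz Nn = z by rewrite /zz divff // scale1r /d addrC subrK.
have xsN : xs Nn = p by rewrite /xs /= zzN.
have uE : forall i, vs i + lam^-1 *: xs i = lam^-1 *: zz i.
  by move=> i; rewrite /vs scalerBr subrK.
have ffin : forall i, f (xs i) \is a fin_num.
  by move=> [|i]; [exact: fx0 | exact: (hP _).1].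
have psub : forall i, prox_subdiff lam f (xs i) (vs i).
  case=> [|i].
    rewrite /vs /xs /= zz0 /z0 addrC addKr scalerA mulVf ?lamN0 // scale1r.
    exact: hx0.
  exact: prox_sub (hP _).1 (hP _).2.
set S' := \sum_(i < Nn) lam^-1 * dotv (zz i) (xs i.+1 - xs i).
set s := \sum_(i < Nn) dotv (vs i + lam^-1 *: xs i) (xs i.+1 - xs i)
   + dotv (vs Nn + lam^-1 *: xs Nn) (x - xs Nn).
have sC : chain_sums lam f x0 x s%:E.
  by exists Nn, xs, vs; split.
have sE : s = S' + lam^-1 * dotv z (x - p).
  rewrite /s /S' uE xsN zzN dotvZl; congr (_ + _).
  by apply: eq_bigr => i _; rewrite uE dotvZl.
apply: le_trans (_ : (s + (gr x0 - jfun x / lam))%:E <= _)%E; last first.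
  by rewrite EFinD leeD2r // ereal_sup_ubound.
rewrite lee_fin.
pose c := fun i : nat => dotv d (xs i) / (Nn%:R * lam).
have stepi : forall i : nat, gr (xs i.+1) - gr (xs i)
    - lam^-1 * dotv (zz i) (xs i.+1 - xs i) <= c i.+1 - c i.
  move=> i; have h := (hP (zz i.+1)).2 (xs i).
  change (P (zz i.+1)) with (xs i.+1) in h.
  rewrite -(fineK (ffin i)) -(fineK (ffin i.+1)) -!EFinD lee_fin in h.
  have zzS : zz i.+1 = zz i + (Nn%:R)^-1 *: d.
    rewrite /zz -[RHS]addrA -scalerDl -natr1 mulrDl mul1r.
    by [].
  move: h; rewrite zzS /c /gr.
  set a := xs i.+1; set b := xs i; set w := zz i.
  set fa := fine (f a); set fb := fine (f b).
  set w' := w + (Nn%:R)^-1 *: d.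
  have Id : (fa + jfun a / lam - (fb + jfun b / lam) - lam^-1 * dotv w (a - b))
      - (dotv d a / (Nn%:R * lam) - dotv d b / (Nn%:R * lam))
    = (fa + jfun (a - w') / lam) - (fb + jfun (b - w') / lam).
    exact: id_step Nn0 lamN0.
  move: Id; set L1 := fa + jfun a / lam - _ - _; set R1 := _ - _.
  set A1 := fa + jfun (a - w') / lam; set B1 := fb + jfun (b - w') / lam.
  move=> Id h; rewrite /R1 in Id; lra.
have TG : \sum_(i < Nn) (gr (xs i.+1) - gr (xs i)) = gr (xs Nn) - gr (xs 0%N).
  by rewrite -(telescope_sumr (fun i => gr (xs i)) (leq0n Nn)) big_mkord.
have TC : \sum_(i < Nn) (c i.+1 - c i) = c Nn - c 0%N.
  by rewrite -(telescope_sumr c (leq0n Nn)) big_mkord.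
have tele : \sum_(i < Nn) (gr (xs i.+1) - gr (xs i)
    - lam^-1 * dotv (zz i) (xs i.+1 - xs i)) <= \sum_(i < Nn) (c i.+1 - c i).
  by apply: ler_sum => i _; exact: stepi.
rewrite sumrB TG TC -/S' xsN in tele.
have x0E : xs 0%N = x0 by [].
rewrite x0E in tele.
have cb : c Nn - c 0%N <= K * (Nn%:R)^-1.
  have -> : c Nn - c 0%N = (dotv d (p - x0) / lam) * (Nn%:R)^-1.
    by rewrite /c xsN x0E dotvBr; field; rewrite Nn0 lamN0.
  rewrite ler_wpM2r // ?invr_ge0 ?ler0n // /K.
  by apply: ler_wpM2r; [rewrite invr_ge0 ltW | exact: ler_norm].
have kb : K * (Nn%:R)^-1 < eps.
  have K1 : 0 < K + 1 by lra.
  move: hN; rewrite ltr_pdivlMr // => hN.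
  apply: le_lt_trans hN; rewrite mulrC; apply: ler_wpM2l; [by rewrite invr_ge0 ler0n | lra].
rewrite sE id_fin ?lamN0 //.
move: tele cb kb; rewrite /gr.
set A1 := fine (f p) + jfun p / lam; set A2 := fine (f x0) + jfun x0 / lam.
set A3 := c Nn - c 0%N; set A4 := K * _.
move=> *; lra.
Qed.

Lemma fhat_le_ph x : (fhat lam f x0 x <= prox_hull lam f x)%E.
Proof.
rewrite fhatE -leeBrDr //.
apply: ge_ereal_sup => _ [k [xs [vs [x00 hps ->]]]].
rewrite leeBrDr // -EFinD.
have ha := chain_aff x00 hps.
apply: le_trans (ph_ge x (lam *: (vs k + lam^-1 *: xs k))).
apply: le_trans (aff_moreau ha x); rewrite lee_fin.
by rewrite /gr; lra.
Qed.

Lemma ph_le_fhat x : (prox_hull lam f x <= fhat lam f x0 x)%E.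
Proof. by apply: ph_le => z; exact: main_ineq. Qed.

Lemma fhat_eq : fhat lam f x0 = prox_hull lam f.
Proof.
by apply: funext => x; apply/eqP; rewrite eq_le fhat_le_ph ph_le_fhat.
Qed.

Lemma fhat_le_f x : (fhat lam f x0 x <= f x)%E.
Proof.
apply: le_trans (fhat_le_ph x) _; apply: ph_le => z.
rewrite leeBlDr //; apply: ereal_inf_lbound; exists x => //.
by rewrite jfun_sym.
Qed.

Lemma moreau_fhat : moreau lam (fhat lam f x0) = moreau lam f.
Proof.
apply: funext => w; apply/eqP; rewrite eq_le; apply/andP; split.
  apply: le_ereal_inf_tmp => _ [y _ <-].
  apply: (@le_trans _ _ (fhat lam f x0 y + (jfun (y - w) / lam)%:E)%E).
    by apply: ereal_inf_lbound; exists y.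
  exact: leeD2r (fhat_le_f y).
apply: le_ereal_inf_tmp => _ [y _ <-].
by have := main_ineq y w; rewrite leeBlDr // jfun_sym.
Qed.

End MainIneq.

Lemma cvx_aff (x : V) (a : R) :
  convex_fun (fun x => (f x + (jfun x / lam)%:E)%E) -> (a%:E < f x)%E ->
  exists (A : R) (u q : V),
    (forall y : V, ((A + dotv u (y - q))%:E <= f y + (jfun y / lam)%:E)%E) /\
    a <= A + dotv u (x - q) - jfun x / lam.
Proof.
move=> hc hax.
set a' := a + jfun x / lam.
have [t t0 low] : exists2 t, 0 < t & forall y : V,
    (a'%:E <= f y + (jfun y / lam + jfun (y - x) / t)%:E)%E.
  have [a1 ha1 ha1'] := ereal_mid hax.
  set del := a1 - a.
  have del0 : 0 < del by rewrite subr_gt0.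
  have [d1 d10 hd1] := flsc ha1'.
  have [d2 d20 hd2] := j_lower x 0 (mulr_gt0 del0 lam0).
  have [mu [lammu [w [c hcw]]]] := coer.
  have mu0 : 0 < mu by apply: lt_trans lammu.
  set s' := mu / lam - 1.
  have s0 : 0 < s' by rewrite /s' subr_gt0 ltr_pdivlMr // mul1r.
  set Cg := c - (1 + s'^-1) * jfun w / mu.
  have glob : forall y : V, (Cg%:E <= f y + (jfun y / lam)%:E)%E.
    move=> y; apply: le_fE => r E; have := hcw y; rewrite E -EFinD lee_fin => hr.
    have hj := jfun_le y (- w) s0; rewrite jfunN in hj.
    have mi : 0 <= mu^-1 by rewrite invr_ge0 ltW.
    have := ler_wpM2r mi hj.
    have e1 : 1 + s' = mu / lam by rewrite /s' addrC subrK.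
    rewrite e1; set Q := (1 + s'^-1) * jfun w.
    have -> : (mu / lam * jfun y + Q) * mu^-1 = jfun y / lam + Q / mu.
      by field; rewrite !gt_eqF.
    rewrite /Cg -/Q; move: hr; set K1 := jfun (y - w).
    set J := jfun y / lam.
    move=> hr h; lra.
  set dd := Num.min d1 d2.
  have dd0 : 0 < dd by rewrite lt_min d10 d20.
  have K0 : 0 < `|a' - Cg| + 1 by rewrite ltr_wpDl.
  exists (dd / (`|a' - Cg| + 1)); first by rewrite divr_gt0.
  move=> y; apply: le_fE => r E.
  have jyx0 : 0 <= jfun (y - x) / (dd / (`|a' - Cg| + 1)).
    by rewrite divr_ge0 ?jfun_ge0 // ltW // divr_gt0.
  case: (ltP (jfun (y - x)) dd) => hy.
  - move: hy; rewrite lt_min => /andP[hy1 hy2].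
    have := hd1 _ hy1; rewrite E lte_fin => hr.
    have := hd2 _ hy2; rewrite !subr0 => hj.
    have li : 0 <= lam^-1 by rewrite invr_ge0 ltW.
    have := ler_wpM2r li hj.
    have -> : (jfun x - del * lam) * lam^-1 = jfun x / lam - del.
      by field; rewrite lamN0.
    move: jyx0; rewrite /a' /del; set T := jfun (y - x) / _.
    set J := jfun y / lam; set Jx := jfun x / lam.
    move=> *; lra.
  - have := glob y; rewrite E -EFinD lee_fin => hg.
    have h3 : `|a' - Cg| + 1 <= jfun (y - x) / (dd / (`|a' - Cg| + 1)).
      set K := `|a' - Cg| + 1.
      have -> : jfun (y - x) / (dd / K) = (jfun (y - x) / dd) * K.
        by field; rewrite !gt_eqF.
      rewrite -[X in X <= _]mul1r; apply: ler_wpM2r; first exact: ltW.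
      by rewrite ler_pdivlMr // mul1r.
    have := ler_norm (a' - Cg).
    move: h3 hg; set T := jfun (y - x) / _; set J := jfun y / lam.
    move=> *; lra.
set l' := lam * t / (lam + t).
have lt0 : 0 < lam + t by rewrite addr_gt0.
have l'0 : 0 < l' by rewrite /l' divr_gt0 // mulr_gt0.
have l'le : l' <= lam.
  by rewrite /l' ler_pdivrMr // ler_pM2l // lerDr ltW.
set wz := (lam / (lam + t)) *: x.
have [p [fp hp]] := prox_ex wz l'0 l'le.
set gp := fine (f p) + jfun p / lam.
have MIN : forall y : V, f y \is a fin_num ->
    gp + jfun (p - x) / t <= fine (f y) + jfun y / lam + jfun (y - x) / t.
  move=> y fy; have := hp y; rewrite -(fineK fp) -(fineK fy) -!EFinD lee_fin.
  rewrite /l' /wz !id_min //; set k := (_ - jfun x / t).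
  rewrite /gp; set A1 := jfun p / lam; set A2 := jfun (p - x) / t.
  set B1 := jfun y / lam; set B2 := jfun (y - x) / t.
  move=> *; lra.
exists gp, (t^-1 *: (x - p)), p; split.
  move=> y; apply: le_fE => r E.
  have fy : f y \is a fin_num by rewrite E.
  set gy := r + jfun y / lam.
  set D := dotv (p - x) (y - p).
  have uD : dotv (t^-1 *: (x - p)) (y - p) = - (t^-1 * D).
    by rewrite dotvZl -opprB dotvNl mulrN.
  suff : gp - gy - t^-1 * D <= 0 by rewrite uD; lra.
  apply: (@small_lin _ _ (jfun (y - p) / t)).
    by rewrite divr_ge0 ?jfun_ge0 // ltW.
  move=> s /andP[s0 s1].
  set ys := (1 - s) *: p + s *: y.
  have hcv := hc p y s (introT andP (conj s0 s1)).
  rewrite /= E -(fineK fp) -!EFinD in hcv.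
  have fys : f ys \is a fin_num.
    rewrite fin_numE fNy /=; move: hcv; rewrite -/ys.
    by case: (f ys) => // ; rewrite addye.
  have := MIN ys fys.
  rewrite -/ys -(fineK fys) -EFinD lee_fin in hcv.
  rewrite /ys id_cvx -/ys -/D -/gp.
  move: hcv; rewrite -/gp -/gy; set gys := fine (f ys) + _.
  set J := jfun (y - p); set Jp := jfun (p - x).
  move=> hcv hm.
  have H2 : s * (gp - gy - t^-1 * D - s * (J / t)) <= 0.
    have -> : s * (gp - gy - t^-1 * D - s * (J / t)) =
       (gp + Jp / t - (gys + (Jp + s * D + s ^+ 2 * J) / t))
       + (gys - ((1 - s) * gp + s * gy)).
      by field; rewrite gt_eqF.
    lra.
  by move: H2; rewrite pmulr_rle0 // subr_le0.
have := low p; rewrite -(fineK fp) -EFinD lee_fin => hl.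
rewrite dotvZl; rewrite (jfun_sym p x) in hl.
have -> : dotv (x - p) (x - p) = 2 * jfun (x - p) by rewrite /jfun; field.
have jj := jfun_ge0 (x - p).
have tj : 0 <= jfun (x - p) / t by rewrite divr_ge0 // ltW.
move: hl; rewrite /a' /gp; set J := jfun (x - p).
have -> : t^-1 * (2 * J) = 2 * (J / t) by rewrite mulrCA [t^-1 * J]mulrC.
move: tj; set Jt := J / t; move=> *; lra.
Qed.

Lemma fhat_cvx (x0 v0 : V) : prox_subdiff lam f x0 v0 ->
  convex_fun (fun x => (f x + (jfun x / lam)%:E)%E) -> fhat lam f x0 = f.
Proof.
move=> hx0 hc; apply: funext => x; apply/eqP; rewrite eq_le (fhat_le_f hx0) /=.
apply: le_approx => a ha.
have [A [u [q [hA ha']]]] := cvx_aff hc ha.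
apply: le_trans (main_ineq hx0 x (lam *: u)).
by apply: le_trans (aff_moreau hA x); rewrite lee_fin.
Qed.

End Main.

Unset Implicit Arguments.
Local Close Scope classical_set_scope.

Theorem mainTheorem12 (R : realType) (n : nat) (f : 'rV[R]_n -> \bar R)
    (lam : R) (x0 : 'rV[R]_n) :
  proper_fun f -> lsc f -> prox_bounded f ->
  (0 < prox_threshold f)%E ->
  0 < lam -> (lam%:E < prox_threshold f)%E ->
  x0 \in dom_prox_subdiff lam f ->
  (fhat lam f x0 = prox_hull lam f /\
   moreau lam (fhat lam f x0) = moreau lam f) /\
  (convex_fun (fun x => (f x + (jfun x / lam)%:E)%E) -> fhat lam f x0 = f).
Proof.
move=> hp hl _ _ l0 lt /set_mem [v0 hv0].
split; [split|].
- by eapply fhat_eq; eassumption.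
- by eapply moreau_fhat; eassumption.
- by move=> hc; eapply fhat_cvx; eassumption.
Qed.
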